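(* For every $c\in V$, the function $h^c_{YX}:[0,\|c\|_X]\to[0,\|c\|_Y]$ is Lipschitz continuous.
   Context: $V$ is a finite dimensional real vector space with a positive definite symmetric bilinear form $\langle\cdot,\cdot\rangle$ and $\|v\|_2=\sqrt{\langle v,v\rangle}$; $\|\cdot\|_X$ is a norm with dual norm $\|v\|_Y=\max\{\langle v,w\rangle:\|w\|_X=1\}$. For $x\in[0,\|c\|_X]$, $\alpha^c_{2X}(x)$ is the unique minimizer of $\|c-a\|_2$ subject to $\|a\|_X\le x$, and $h^c_{YX}(x)=\|c-\alpha^c_{2X}(x)\|_Y$. *)

(* Defs.v *)
From Stdlib Require Fin.
From Stdlib Require Import Reals.
Open Scope R_scope.

(* V = R^n, vectors as functions on Fin.t n; the inner product is an
   ARBITRARY positive definite symmetric bilinear form B (not the dot product). *)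
Definition vec (n : nat) := Fin.t n -> R.
Definition vzero {n} : vec n := fun _ => 0.
Definition vadd {n} (u v : vec n) : vec n := fun i => u i + v i.
Definition vscale {n} (t : R) (v : vec n) : vec n := fun i => t * v i.
Definition vsub {n} (u v : vec n) : vec n := fun i => u i - v i.

Definition is_inner {n} (B : vec n -> vec n -> R) : Prop :=
  (forall u v, B u v = B v u) /\
  (forall u v w, B (vadd u v) w = B u w + B v w) /\
  (forall t u v, B (vscale t u) v = t * B u v) /\
  (forall v, v <> vzero -> 0 < B v v).

Definition norm2 {n} (B : vec n -> vec n -> R) (v : vec n) : R := sqrt (B v v).

Definition is_norm {n} (N : vec n -> R) : Prop :=
  (forall v, N v = 0 -> v = vzero) /\
  (forall t v, N (vscale t v) = Rabs t * N v) /\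
  (forall u v, N (vadd u v) <= N u + N v).

Definition is_dual_norm {n} (B : vec n -> vec n -> R) (NX NY : vec n -> R) : Prop :=
  forall v, (exists w, NX w = 1 /\ B v w = NY v) /\
            (forall w, NX w = 1 -> B v w <= NY v).

Definition is_alpha {n} (B : vec n -> vec n -> R) (NX : vec n -> R)
  (c : vec n) (x : R) (a : vec n) : Prop :=
  NX a <= x /\ forall b, NX b <= x -> norm2 B (vsub c a) <= norm2 B (vsub c b).

(* Main.v *)
Require Import Defs.
From Stdlib Require Import Reals Lra Psatz List FinFun Classical FunctionalExtensionality.
From Stdlib Require Fin.
Open Scope R_scope.

Ltac vext := apply functional_extensionality; intro; unfold vadd, vsub, vscale, vzero.

Section Basic.
Lemma B_sym {n} B (HB : @is_inner n B) u v : B u v = B v u.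
Proof. destruct HB as [H _]; apply H. Qed.
Lemma B_add_l {n} B (HB : @is_inner n B) u v w : B (vadd u v) w = B u w + B v w.
Proof. destruct HB as [_ [H _]]; apply H. Qed.
Lemma B_scale_l {n} B (HB : @is_inner n B) t u v : B (vscale t u) v = t * B u v.
Proof. destruct HB as [_ [_ [H _]]]; apply H. Qed.
Lemma B_add_r {n} B (HB : @is_inner n B) u v w : B w (vadd u v) = B w u + B w v.
Proof. rewrite !(B_sym B HB w). apply B_add_l; auto. Qed.
Lemma B_scale_r {n} B (HB : @is_inner n B) t u v : B v (vscale t u) = t * B v u.
Proof. rewrite !(B_sym B HB v). apply B_scale_l; auto. Qed.
Lemma B_zero_l {n} B (HB : @is_inner n B) w : B vzero w = 0.
Proof. replace (@vzero n) with (vscale 0 (@vzero n)) by (vext; ring).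
  rewrite B_scale_l; auto; ring. Qed.
Lemma B_zero_r {n} B (HB : @is_inner n B) w : B w vzero = 0.
Proof. rewrite B_sym; auto; apply B_zero_l; auto. Qed.
Lemma B_sub_l {n} B (HB : @is_inner n B) u v w : B (vsub u v) w = B u w - B v w.
Proof. replace (vsub u v) with (vadd u (vscale (-1) v)) by (vext; ring).
  rewrite B_add_l, B_scale_l; auto; ring. Qed.
Lemma B_sub_r {n} B (HB : @is_inner n B) u v w : B w (vsub u v) = B w u - B w v.
Proof. rewrite !(B_sym B HB w). apply B_sub_l; auto. Qed.
Lemma B_nonneg {n} B (HB : @is_inner n B) v : 0 <= B v v.
Proof. destruct (classic (v = vzero)) as [->|H].
  - rewrite B_zero_l; auto; lra.
  - destruct HB as [_ [_ [_ H4]]]; apply Rlt_le, H4, H. Qed.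

Lemma CS {n} B (HB : @is_inner n B) u v : Rabs (B u v) <= norm2 B u * norm2 B v.
Proof.
  unfold norm2.
  assert (Hu := B_nonneg B HB u). assert (Hv := B_nonneg B HB v).
  assert (Hsq : B u v * B u v <= B u u * B v v).
  { destruct (classic (v = vzero)) as [->|Hnz].
    - rewrite B_zero_r; auto. rewrite B_zero_l; auto. nra.
    - assert (Hb : 0 < B v v) by (destruct HB as [_ [_ [_ H4]]]; apply H4, Hnz).
      set (t := B u v / B v v).
      assert (H := B_nonneg B HB (vadd u (vscale (-t) v))).
      rewrite B_add_l, B_add_r, B_add_r, B_scale_l, B_scale_l, B_scale_r, B_scale_r in H; auto.
      rewrite (B_sym B HB v u) in H.
      unfold t in H.
      assert (0 <= (B u u * B v v - B u v * B u v) / B v v).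
      { replace ((B u u * B v v - B u v * B u v) / B v v) with
         (B u u + - (B u v / B v v) * B u v +
 (- (B u v / B v v) * B u v + - (B u v / B v v) * (- (B u v / B v v) * B v v))) by (field; lra).
        exact H. }
      apply Rmult_le_compat_r with (r := B v v) in H0; [|lra].
      replace ((B u u * B v v - B u v * B u v) / B v v * B v v) with (B u u * B v v - B u v * B u v) in H0 by (field; lra).
      lra. }
  rewrite <- sqrt_mult by auto. rewrite <- sqrt_Rsqr_abs. apply sqrt_le_1_alt. unfold Rsqr. lra.
Qed.
End Basic.


Lemma NX_zero {n} NX (HX : @is_norm n NX) : NX vzero = 0.
Proof. destruct HX as [_ [H _]].
  replace (@vzero n) with (vscale 0 (@vzero n)) by (vext; ring).
  rewrite H, Rabs_R0; ring. Qed.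
Lemma NX_opp {n} NX (HX : @is_norm n NX) v : NX (vscale (-1) v) = NX v.
Proof. destruct HX as [_ [H _]]. rewrite H. replace (Rabs (-1)) with 1 by (rewrite Rabs_left; lra). ring. Qed.
Lemma NX_nonneg {n} NX (HX : @is_norm n NX) v : 0 <= NX v.
Proof. assert (H := NX_zero NX HX). assert (Ho := NX_opp NX HX v).
  destruct HX as [_ [_ H3]].
  specialize (H3 v (vscale (-1) v)).
  replace (vadd v (vscale (-1) v)) with (@vzero n) in H3 by (vext; ring).
  rewrite Ho in H3. lra.
Qed.

Lemma NY_abs {n} B NX NY (HB : @is_inner n B) (HX : is_norm NX) (HY : is_dual_norm B NX NY)
  v w : NX w = 1 -> Rabs (B v w) <= NY v.
Proof. intro Hw. destruct (HY v) as [_ H2].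
  unfold Rabs; destruct (Rcase_abs (B v w)).
  - assert (H := H2 (vscale (-1) w)). rewrite NX_opp, B_scale_r in H; auto. lra.
  - apply H2; auto. Qed.
Lemma NY_nonneg {n} B NX NY (HB : @is_inner n B) (HX : is_norm NX) (HY : is_dual_norm B NX NY)
  v : 0 <= NY v.
Proof. destruct (HY v) as [[w [Hw _]] _].
  eapply Rle_trans; [apply Rabs_pos|]. eapply NY_abs; eauto. Qed.
Lemma B_le_NX_NY {n} B NX NY (HB : @is_inner n B) (HX : is_norm NX) (HY : is_dual_norm B NX NY)
  r a x : NX a <= x -> B r a <= x * NY r.
Proof. intro Ha. assert (H0 := NX_nonneg NX HX a). assert (HN := NY_nonneg B NX NY HB HX HY r).
  destruct (Req_dec (NX a) 0) as [Hz|Hnz].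
  - destruct HX as [H1 _]. rewrite (H1 a Hz), B_zero_r; auto. nra.
  - set (w := vscale (/ NX a) a).
    assert (Hw : NX w = 1).
    { unfold w. destruct HX as [_ [H2 _]]. rewrite H2, Rabs_right.
      field; auto. apply Rle_ge, Rlt_le, Rinv_0_lt_compat; lra. }
    replace a with (vscale (NX a) w) by (unfold w; vext; field; auto).
    rewrite B_scale_r; auto.
    assert (B r w <= NY r) by (destruct (HY r) as [_ H2]; apply H2, Hw).
    assert (NX (vscale (NX a) w) = NX a) by (unfold w; f_equal; vext; field; auto).
    nra. Qed.
Lemma NY_sub {n} B NX NY (HB : @is_inner n B) (HX : is_norm NX) (HY : is_dual_norm B NX NY)
  u v : NY u - NY v <= NY (vsub u v).
Proof. destruct (HY u) as [[w [Hw Hu]] _].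
  assert (Eu : B u w = B (vsub u v) w + B v w)
    by (rewrite <- B_add_l; auto; f_equal; vext; ring).
  assert (B (vsub u v) w <= NY (vsub u v)) by (destruct (HY (vsub u v)) as [_ Hq]; exact (Hq w Hw)).
  assert (B v w <= NY v) by (destruct (HY v) as [_ Hq]; exact (Hq w Hw)). lra. Qed.


Definition proj {n} (B : vec n -> vec n -> R) (fs : list (vec n)) (v : vec n) : vec n :=
  fold_right (fun f acc => vadd (vscale (B v f) f) acc) vzero fs.

Definition psum {n} (B : vec n -> vec n -> R) (fs : list (vec n)) (v w : vec n) : R :=
  fold_right (fun f acc => B v f * B f w + acc) 0 fs.

Lemma proj_B {n} B (HB : @is_inner n B) fs v w : B (proj B fs v) w = psum B fs v w.
Proof. induction fs as [|f fs IH]; simpl.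
  - apply B_zero_l; auto.
  - rewrite B_add_l, B_scale_l, IH; auto. Qed.

Lemma psum_zero {n} B fs v w : (forall f, In f fs -> B f w = 0) -> @psum n B fs v w = 0.
Proof. induction fs as [|f fs IH]; simpl; intro H; auto.
  rewrite (H f (or_introl eq_refl)), IH; [ring|]. intros; apply H; auto. Qed.

Lemma GS {n} B (HB : @is_inner n B) (l : list (vec n)) :
  exists fs, (forall f, In f fs -> B f f = 1) /\
    (forall v g, In g fs -> B (proj B fs v) g = B v g) /\
    (forall u, In u l -> proj B fs u = u).
Proof.
  induction l as [|u l IH].
  - exists nil; simpl; repeat split; intros; contradiction.
  - destruct IH as [fs [HN [HQ HR]]].
    set (u' := vsub u (proj B fs u)).
    destruct (classic (u' = vzero)) as [Hz|Hnz].
    + exists fs; repeat split; auto.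
      intros u0 [<-|Hin]; auto.
      apply functional_extensionality; intro i.
      assert (E := f_equal (fun z => z i) Hz). unfold u', vsub, vzero in E. simpl in E. lra.
    + assert (Hpos : 0 < B u' u') by (destruct HB as [_ [_ [_ H4]]]; apply H4, Hnz).
      set (s := norm2 B u').
      assert (Hs : 0 < s) by (unfold s, norm2; apply sqrt_lt_R0; auto).
      assert (Hss : s * s = B u' u') by (unfold s, norm2; apply sqrt_sqrt; lra).
      set (g := vscale (/ s) u').
      assert (Hort : forall h, In h fs -> B u' h = 0).
      { intros h Hh. unfold u'. rewrite B_sub_l, HQ; auto; ring. }
      assert (Hhg : forall h, In h fs -> B h g = 0).
      { intros h Hh. unfold g. rewrite B_scale_r, B_sym, Hort; auto; ring. }
      assert (Hpg : forall v, B (proj B fs v) g = 0).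
      { intro v. rewrite proj_B; auto. apply psum_zero; auto. }
      assert (Hgg : B g g = 1).
      { unfold g. rewrite B_scale_l, B_scale_r; auto. rewrite <- Hss. field. lra. }
      exists (g :: fs). split; [|split].
      * intros f [<-|Hf]; auto.
      * intros v h Hh. simpl. fold (proj B fs v).
        rewrite B_add_l, B_scale_l; auto.
        destruct Hh as [<-|Hh].
        -- rewrite Hgg, Hpg. ring.
        -- rewrite HQ by auto. rewrite (B_sym B HB g h). rewrite (Hhg h Hh). ring.
      * intros u0 Hu0. simpl. fold (proj B fs u0).
        destruct Hu0 as [<-|Hu0].
        -- assert (Bug : B u g = s).
           { assert (Eu : u = vadd u' (proj B fs u)) by (unfold u'; vext; ring).
             unfold g. rewrite B_scale_r; auto.
             rewrite Eu at 1. rewrite B_add_l; auto.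
             rewrite proj_B; auto.
             rewrite psum_zero. 2:{ intros f Hf. rewrite B_sym by auto. apply Hort; auto. }
             rewrite <- Hss. field. lra. }
           rewrite Bug. unfold g, u'. vext. field. lra.
        -- assert (B u0 g = 0) by (rewrite <- (HR u0 Hu0); auto).
           rewrite H, (HR u0 Hu0). vext. ring.
Qed.


Fixpoint fin_enum (n : nat) : list (Fin.t n) :=
  match n with 0 => nil | S m => Fin.F1 :: map Fin.FS (fin_enum m) end.

Lemma fin_enum_In n (i : Fin.t n) : In i (fin_enum n).
Proof. induction i; simpl; [left; auto|right; apply in_map; auto]. Qed.

Lemma fin_enum_NoDup n : NoDup (fin_enum n).
Proof. induction n; simpl; constructor.
  - intro H. apply in_map_iff in H. destruct H as [x [Hx _]]. inversion Hx.
  - apply Injective_map_NoDup; auto. intros x y; apply Fin.FS_inj. Qed.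

Definition ebasis {n} (i : Fin.t n) : vec n := fun j => if Fin.eq_dec i j then 1 else 0.

Definition expand {n} (v : vec n) (l : list (Fin.t n)) : vec n :=
  fold_right (fun i acc => vadd (vscale (v i) (ebasis i)) acc) vzero l.

Lemma expand_at_notin {n} (v : vec n) l j : ~ In j l -> expand v l j = 0.
Proof. induction l as [|a l IH]; simpl; intro H; unfold vzero, vadd, vscale in *; auto.
  unfold ebasis. destruct (Fin.eq_dec a j) as [->|Hn].
  - exfalso; apply H; left; auto.
  - fold (expand v l). rewrite IH; [ring|]. tauto. Qed.

Lemma expand_at {n} (v : vec n) l j : NoDup l -> In j l -> expand v l j = v j.
Proof. induction l as [|a l IH]; simpl; intros Hd H; [contradiction|].
  inversion Hd; subst. unfold vadd, vscale, ebasis. fold (expand v l).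
  destruct (Fin.eq_dec a j) as [->|Hn].
  - rewrite expand_at_notin; auto. ring.
  - destruct H as [->|H]; [congruence|]. rewrite IH; auto. ring. Qed.

Lemma expand_full {n} (v : vec n) : expand v (fin_enum n) = v.
Proof. apply functional_extensionality; intro j. apply expand_at.
  apply fin_enum_NoDup. apply fin_enum_In. Qed.

Lemma proj_add {n} B (HB : @is_inner n B) fs u v :
  proj B fs (vadd u v) = vadd (proj B fs u) (proj B fs v).
Proof. induction fs as [|f fs IH]; simpl.
  - vext; ring.
  - fold (proj B fs (vadd u v)) (proj B fs u) (proj B fs v). rewrite IH, B_add_l; auto.
    vext; ring. Qed.
Lemma proj_scale {n} B (HB : @is_inner n B) fs t u :
  proj B fs (vscale t u) = vscale t (proj B fs u).
Proof. induction fs as [|f fs IH]; simpl.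
  - vext; ring.
  - fold (proj B fs (vscale t u)) (proj B fs u). rewrite IH, B_scale_l; auto.
    vext; ring. Qed.
Lemma proj_zero {n} B (HB : @is_inner n B) fs : proj B fs vzero = vzero.
Proof. replace (@vzero n) with (vscale 0 (@vzero n)) by (vext; ring).
  rewrite proj_scale; auto. vext; ring. Qed.

Lemma proj_expand {n} B (HB : @is_inner n B) fs v l :
  (forall i, In i l -> proj B fs (ebasis i) = ebasis i) -> proj B fs (expand v l) = expand v l.
Proof. induction l as [|a l IH]; simpl; intro H.
  - apply proj_zero; auto.
  - fold (expand v l). rewrite proj_add, proj_scale, H, IH; auto. Qed.

Lemma psum_bound {n} B NX NY (HB : @is_inner n B) (HX : is_norm NX) (HY : is_dual_norm B NX NY)
  fs v w : (forall f, In f fs -> B f f = 1) -> NX w = 1 ->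
  psum B fs v w <= norm2 B v * fold_right (fun f acc => NY f + acc) 0 fs.
Proof. intros HN Hw. induction fs as [|f fs IH]; simpl.
  - lra.
  - unfold psum in IH. rewrite Rmult_plus_distr_l. apply Rplus_le_compat.
    + eapply Rle_trans; [apply Rle_abs|]. rewrite Rabs_mult.
      apply Rmult_le_compat; try apply Rabs_pos.
      * eapply Rle_trans; [apply CS; auto|].
        unfold norm2 at 2. rewrite (HN f (or_introl eq_refl)), sqrt_1. lra.
      * eapply NY_abs; eauto.
    + apply IH. intros; apply HN; simpl; auto.
Qed.

Lemma findim {n} B NX NY (HB : @is_inner n B) (HX : is_norm NX) (HY : is_dual_norm B NX NY) :
  exists M, 0 <= M /\ forall v, NY v <= M * norm2 B v.
Proof.
  destruct (GS B HB (map ebasis (fin_enum n))) as [fs [HN [HQ HR]]].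
  exists (fold_right (fun f acc => NY f + acc) 0 fs). split.
  - clear HN HQ HR. induction fs; simpl; [lra|]. assert (H := NY_nonneg B NX NY HB HX HY a). lra.
  - intro v. destruct (HY v) as [[w [Hw Hv]] _].
    assert (Hp : proj B fs v = v).
    { rewrite <- (expand_full v) at 2. rewrite <- (expand_full v) at 1.
      apply proj_expand; auto. intros i Hi. apply HR. apply in_map; auto. }
    rewrite <- Hv. replace (B v w) with (B (proj B fs v) w) by (rewrite Hp; auto). rewrite proj_B; auto. rewrite Rmult_comm. eapply psum_bound; eauto.
Qed.


Lemma var_ineq {n} B NX (HB : @is_inner n B) (HX : is_norm NX) c x a :
  is_alpha B NX c x a -> forall b, NX b <= x -> B (vsub c a) (vsub b a) <= 0.
Proof.
  intros [Ha Hmin] b Hb.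
  set (r := vsub c a). set (d := vsub b a).
  set (p := B r d). set (q := B d d).
  assert (Hq : 0 <= q) by apply (B_nonneg B HB).
  destruct (Rle_or_lt p 0) as [|Hp]; auto. exfalso.
  set (t := p / (p + q)).
  assert (Ht : t * (p + q) = p) by (unfold t; field; lra).
  assert (Ht0 : 0 < t) by (unfold t; apply Rdiv_lt_0_compat; lra).
  assert (Ht1 : t <= 1) by nra.
  set (at' := vadd (vscale (1 - t) a) (vscale t b)).
  assert (Hat : NX at' <= x).
  { assert (0 <= NX a) by (apply NX_nonneg; auto). destruct HX as [_ [H2 H3]]. unfold at'. eapply Rle_trans; [apply H3|].
    rewrite !H2, !Rabs_right by lra.
    nra. }
  assert (Hm := Hmin at' Hat).
  replace (vsub c at') with (vadd r (vscale (-t) d)) in Hm by (unfold at', r, d; vext; ring).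
  unfold norm2 in Hm. apply sqrt_le_0 in Hm; try apply (B_nonneg B HB).
  rewrite B_add_l, B_add_r, B_add_r, B_scale_l, B_scale_l, B_scale_r, B_scale_r in Hm; auto.
  rewrite (B_sym B HB d r) in Hm. fold p q in Hm.
  change (B (vsub c a) (vsub c a)) with (B r r) in Hm.
  assert (H1 : t * (2 * p - t * q) <= 0) by lra.
  assert (H2 : 2 * p - t * q <= 0) by (apply Rmult_le_reg_l with t; lra).
  nra.
Qed.

Theorem mainTheorem9 (n : nat) (B : vec n -> vec n -> R) (NX NY : vec n -> R)
  (HB : is_inner B) (HX : is_norm NX) (HY : is_dual_norm B NX NY)
  (c : vec n) (alpha : R -> vec n)
  (Halpha : forall x, 0 <= x <= NX c -> is_alpha B NX c x (alpha x)) :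
  exists L : R, 0 <= L /\
    forall x y, 0 <= x <= NX c -> 0 <= y <= NX c ->
      Rabs (NY (vsub c (alpha x)) - NY (vsub c (alpha y))) <= L * Rabs (x - y).
Proof.
  destruct (findim B NX NY HB HX HY) as [M [HM0 HM]].
  exists (M * M). split; [nra|].
  assert (Key : forall x, 0 <= x <= NX c -> B (vsub c (alpha x)) (alpha x) = x * NY (vsub c (alpha x))).
  { intros x Hx. assert (Ha := Halpha x Hx).
    apply Rle_antisym.
    - apply B_le_NX_NY with NX; auto. apply Ha.
    - destruct (HY (vsub c (alpha x))) as [[w [Hw Hv]] _].
      assert (Hb : NX (vscale x w) <= x).
      { destruct HX as [_ [H2 _]]. rewrite H2, Hw, Rabs_right; lra. }
      assert (H := var_ineq B NX HB HX c x (alpha x) Ha (vscale x w) Hb).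
      rewrite B_sub_r, B_scale_r, Hv in H; auto. lra. }
  intros x y Hx Hy.
  set (ax := alpha x). set (ay := alpha y).
  set (rx := vsub c ax). set (ry := vsub c ay).
  assert (Ex := Key x Hx). assert (Ey := Key y Hy). fold ax ay rx ry in Ex, Ey.
  assert (F1 : B rx ay <= y * NY rx) by (apply B_le_NX_NY with NX; auto; apply (Halpha y Hy)).
  assert (F2 : B ry ax <= x * NY ry) by (apply B_le_NX_NY with NX; auto; apply (Halpha x Hx)).
  set (D := NY rx - NY ry).
  set (dl := vsub rx ry).
  assert (Hdl : B dl dl <= (y - x) * D).
  { replace dl with (vsub ay ax) at 2 by (unfold dl, rx, ry; vext; ring).
    unfold dl. rewrite B_sub_l, !B_sub_r; auto. unfold D. lra. }
  set (s := norm2 B dl).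
  assert (Hs0 : 0 <= s) by apply sqrt_pos.
  assert (Hss : s * s = B dl dl) by (apply sqrt_sqrt, (B_nonneg B HB)).
  assert (HD1 : D <= M * s).
  { eapply Rle_trans; [apply (NY_sub B NX NY HB HX HY)|]. apply HM. }
  assert (HD2 : - D <= M * s).
  { assert (Hn : norm2 B (vsub ry rx) = s).
    { unfold s, norm2. f_equal.
      replace (vsub ry rx) with (vscale (-1) dl) by (unfold dl; vext; ring).
      rewrite B_scale_l, B_scale_r; auto. ring. }
    pose proof (NY_sub B NX NY HB HX HY ry rx). pose proof (HM (vsub ry rx)).
    rewrite Hn in H0. unfold D. lra. }
  assert (HDa : Rabs D <= M * s) by (apply Rabs_le; lra).
  assert (Hs2 : s * s <= Rabs (x - y) * Rabs D).
  { rewrite Hss. eapply Rle_trans; [apply Hdl|]. rewrite (Rabs_minus_sym x y), <- Rabs_mult.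
    apply Rle_abs. }
  fold D.
  assert (HxyP := Rabs_pos (x - y)). assert (HDP := Rabs_pos D).
  destruct (Req_dec s 0) as [Hz|Hnz].
  - rewrite Hz in HDa. nra.
  - assert (Hsb : s <= M * Rabs (x - y)).
    { apply Rmult_le_reg_r with s; [lra|]. nra. }
    nra.
Qed.
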